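(* Let $n\ge4$ and $\lambda=(n-2,2)$, and let $m=\lfloor (n-1)/2\rfloor$. Then $P(\lambda)\setminus\{0\}$, the poset on the elements $\{1,2,\dots,n-2\}$, is as follows: its minimal elements are $\{1,2,\dots,m\}$, its maximal elements are $\{m+1,\dots,n-2\}$, and its cover relations are exactly that for each $j$ with $1\le j\le n-2-m$, the maximal element $m+j$ covers each of $j,j+1,\dots,m$ (and there are no other strict relations).
   Context: For a vector $\lambda=(\lambda_1,\dots,\lambda_d)$ of positive integers with sum $n\ge2$, let $\Delta_\lambda=\mathrm{conv}(e_1,\dots,e_d,\lambda)\subset\mathbb{R}^d$ with fundamental parallelepiped $\Pi_\lambda=\{\sum_{i=1}^d\gamma_i(1,e_i)+\gamma_{d+1}(1,\lambda):0\le\gamma_i<1\}\subset\mathbb{R}^{d+1}$. The poset $P(\lambda)$ is $\Pi_\lambda\cap\mathbb{Z}^{d+1}$ ordered by $\sigma\preceq\mu$ iff $\mu-\sigma\in\Pi_\lambda\cap\mathbb{Z}^{d+1}$; $0$ is its minimum. For $0\le b<n-1$ set $p(b)=\left(\sum_{t}\lceil b\lambda_t/(n-1)\rceil-b,\ \lceil b\lambda_1/(n-1)\rceil,\dots,\lceil b\lambda_d/(n-1)\rceil\right)$; $b\mapsto p(b)$ is a bijection from $\{0,\dots,n-2\}$ onto $\Pi_\lambda\cap\mathbb{Z}^{d+1}$, and each integer $b$ is identified with $p(b)$ (so $0$ corresponds to the origin). *)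

(* Defs.v *)
From mathcomp Require Import all_boot all_order all_algebra.
Unset Printing Implicit Defensive.
Import Order.TTheory GRing.Theory Num.Theory.

(* lambda = (lambda_1,...,lambda_d) is a seq nat of size d; n = sumn lambda.
   Points of R^{d+1} (resp. Z^{d+1}) are indexed by 'I_d.+1: coordinate 0 is the
   "1"-coordinate, coordinate k>0 is the k-th coordinate of R^d. *)

(* k-th coordinate of the i-th generator of the fundamental parallelepiped:
   generators i < d are (1, e_{i+1}); generator i = d is (1, lambda). *)
Definition gen (lam : seq nat) (i k : nat) : nat :=
  if k == 0%N then 1%N
  else if i == size lam then nth 0%N lam k.-1
  else nat_of_bool (i == k.-1).

(* v is in the half-open fundamental parallelepiped Pi_lambda
   (coefficients gamma taken rational; the generators are linearly independent
   and rational, so for integer v these are the only possible coefficients). *)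
Definition inPi (lam : seq nat) (v : 'I_(size lam).+1 -> int) : Prop :=
  exists g : 'I_(size lam).+1 -> rat,
    (forall i, (0 <= g i < 1)%R) /\
    forall k : 'I_(size lam).+1,
      ((v k)%:~R = \sum_(i < (size lam).+1) g i * (gen lam i k)%:R)%R.

Definition Ple (lam : seq nat) (s mu : 'I_(size lam).+1 -> int) : Prop :=
  inPi lam (fun k => (mu k - s k)%R).

Definition cdiv (x y : nat) : nat := (x + y.-1) %/ y.

Definition pvec (lam : seq nat) (b : nat) : 'I_(size lam).+1 -> int :=
  fun k =>
    if val k == 0%N then
      ((\sum_(t < size lam) cdiv (b * nth 0%N lam t) (sumn lam).-1)%:Z - b%:Z)%R
    else ((cdiv (b * nth 0%N lam (val k).-1) (sumn lam).-1)%:Z)%R.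

Definition ble (lam : seq nat) (a b : nat) : Prop := Ple lam (pvec lam a) (pvec lam b).

(* Main.v *)
Require Import Defs.
From mathcomp Require Import all_boot all_order all_algebra.
From mathcomp Require Import zify ring lra.
Import Order.TTheory GRing.Theory Num.Theory.
Local Open Scope ring_scope.

Definition cc (n b : nat) : nat := if (2 * b <= n - 1)%N then 1%N else 2%N.

Lemma cdiv_eq x y q : (0 < y)%N -> (q * y <= x + y.-1 < q * y + y)%N -> cdiv x y = q.
Proof.
move=> y0 /andP[h1 h2]; rewrite /cdiv.
have -> : (x + y.-1 = q * y + (x + y.-1 - q * y))%N by lia.
rewrite divnMDl // divn_small; lia.
Qed.

Lemma pvecE n b (k : 'I_3) : (4 <= n)%N -> (1 <= b <= n - 2)%N ->
  pvec [:: n - 2; 2]%N b k =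
  (if val k == 0%N then (cc n b)%:Z else if val k == 1%N then b%:Z else (cc n b)%:Z).
Proof.
move=> hn hb.
have hs : (sumn [:: n - 2; 2]%N).-1 = (n - 1)%N by rewrite /=; lia.
have c1 : cdiv (b * (n - 2)) (n - 1) = b.
  apply: cdiv_eq; first lia.
  apply/andP; split; nia.
have c2 : cdiv (b * 2) (n - 1) = cc n b.
  rewrite /cc; case: ifP => h; apply: cdiv_eq; try lia; apply/andP; split; nia.
rewrite /pvec hs.
case: k => [[|[|[|k]]] hk] //=.
- rewrite big_ord_recr big_ord_recr big_ord0 /= c1 c2; lia.
- by rewrite c1.
- by rewrite c2.
Qed.

Definition o0 : 'I_3 := @Ordinal 3 0 isT.
Definition o1 : 'I_3 := @Ordinal 3 1 isT.
Definition o2 : 'I_3 := @Ordinal 3 2 isT.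

Lemma S3 (F : 'I_3 -> rat) : \sum_(i < 3) F i = F o0 + F o1 + F o2.
Proof.
rewrite !big_ord_recl big_ord0 addr0 addrA /=.
by congr (F _ + F _ + F _); apply: val_inj.
Qed.

Lemma bleE n a b : (4 <= n)%N -> (1 <= a <= n - 2)%N -> (1 <= b <= n - 2)%N ->
  ble [:: n - 2; 2]%N a b <->
  (a = b \/ (a < b /\ 2 * a <= n - 1 < 2 * b /\ 2 * (b - a) <= n - 1))%N.
Proof.
move=> hn ha hb.
have hn2 : ((n - 2)%N%:R : rat) = n%:R - 2 by rewrite natrB // (leq_trans _ hn).
have hN : (4 : rat) <= n%:R by rewrite (ler_nat rat 4 n).

split.
- move=> [g [hg hk]].
  have e0 := hk o0; have e1 := hk o1; have e2 := hk o2.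
  rewrite S3 (pvecE _ _ o0 hn hb) (pvecE _ _ o0 hn ha) /= in e0.
  rewrite S3 (pvecE _ _ o1 hn hb) (pvecE _ _ o1 hn ha) /= hn2 in e1.
  rewrite S3 (pvecE _ _ o2 hn hb) (pvecE _ _ o2 hn ha) /= in e2.
  rewrite /gen /= in e0 e1 e2.
  have := hg o0; have := hg o1; have := hg o2.
  move=> /andP[g2a g2b] /andP[g1a g1b] /andP[g0a g0b].
  have key : g o2 * (n%:R - 1) = b%:R - a%:R.
    lra.
  have e3 : (cc n b)%:R - (cc n a)%:R = g o1 + 2 * g o2 :> rat by lra.
  case: (ltngtP a b) => hab; last by left.
  + have hr : (a%:R < b%:R :> rat) by rewrite ltr_nat.
    have g2p : 0 < g o2.
      rewrite lt_neqAle g2a andbT; apply/eqP => h0.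
      by move: key; rewrite -h0 mul0r; lra.
    right; split=> //.
    move: e3; rewrite /cc.
    case h1: (2 * a <= n - 1)%N; case h2: (2 * b <= n - 1)%N => /= e3.
    * exfalso; lra.
    * split; first lia.
      rewrite leqNgt; apply/negP => hc.
      have : (n + 2 * a < 2 * b + 1)%N by lia.
      rewrite -(ltr_nat rat) => hr2.
      have h5 : 0 <= 1 - 2 * g o2 by lra.
      have h6 : 0 <= (n%:R : rat) - 1 by lra.
      have := mulr_ge0 h5 h6; lra.
    * exfalso; lia.
    * exfalso; lra.
  + have hr : (b%:R < a%:R :> rat) by rewrite ltr_nat.
    have h6 : 0 <= (n%:R : rat) - 1 by lra.
    exfalso; have := mulr_ge0 g2a h6; lra.
- move=> [<-|[hab [/andP[h1 h2] h3]]].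
  + exists (fun=> 0); split => [i|k]; first by rewrite lexx ltr01.
    by rewrite subrr big1 ?mulr0z // => i _; rewrite mul0r.
  + have hN1 : (0 : rat) < n%:R - 1 by lra.
    have hba : (a%:R < b%:R :> rat) by rewrite ltr_nat.
    have h3r : ((2 * b + 1)%N%:R <= (n + 2 * a)%N%:R :> rat) by rewrite ler_nat; lia.
    set t : rat := (b%:R - a%:R) / (n%:R - 1).
    have ht : t * (n%:R - 1) = b%:R - a%:R by rewrite divfK //; apply: lt0r_neq0.
    have tp : 0 < t by apply: divr_gt0; lra.
    have t2 : 2 * t <= 1.
      rewrite leNgt; apply/negP => hc.
      have hc' : 0 < 2 * t - 1 by lra.
      have := mulr_gt0 hc' hN1; lra.
    have hcb : cc n b = 2%N by rewrite /cc leqNgt h2.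
    have hca : cc n a = 1%N by rewrite /cc h1.
    exists (fun i => if val i == 1%N then 1 - 2 * t else t).
    split => [i|k]; first by case: ifP => _; apply/andP; split; lra.
    rewrite S3 (pvecE _ _ k hn hb) (pvecE _ _ k hn ha) hca hcb.
    case: k => [[|[|[|k]]] hk] //=; rewrite /gen /= ?hn2; lra.
Qed.

Local Close Scope ring_scope.

Theorem proposition2p15 (n : nat) (hn : (4 <= n)%N) :
  let lam := [:: n - 2; 2]%N in
  let m := ((n - 1) %/ 2)%N in
  let inP (b : nat) := (1 <= b <= n - 2)%N in
  (* minimal elements of P(lambda) \ {0} *)
  (forall b, inP b ->
     ((forall a, inP a -> a != b -> ~ ble lam a b) <-> (b <= m)%N)) /\
  (* maximal elements of P(lambda) \ {0} *)
  (forall b, inP b ->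
     ((forall a, inP a -> a != b -> ~ ble lam b a) <-> (m < b)%N)) /\
  (* cover relations: b covers a iff b = m + j with 1 <= j <= n-2-m and j <= a <= m *)
  (forall a b, inP a -> inP b ->
     ((a != b /\ ble lam a b /\
       ~ (exists c, inP c /\ c != a /\ c != b /\ ble lam a c /\ ble lam c b))
      <-> (exists j, (1 <= j <= n - 2 - m)%N /\ b = (m + j)%N /\ (j <= a <= m)%N))) /\
  (* no other strict relations *)
  (forall a b, inP a -> inP b -> a != b ->
     (ble lam a b <->
      (exists j, (1 <= j <= n - 2 - m)%N /\ b = (m + j)%N /\ (j <= a <= m)%N))).
Proof.
cbv zeta.
have BE : forall a b, (1 <= a <= n - 2)%N -> (1 <= b <= n - 2)%N -> (ble [:: n - 2; 2]%N a b <->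
  (a = b \/ (a < b /\ 2 * a <= n - 1 < 2 * b /\ 2 * (b - a) <= n - 1))%N).
  by move=> a b ha hb; apply: bleE.
split; [|split; [|split]].
- move=> b hb; split.
  + move=> H; rewrite leqNgt; apply/negP => hbm.
    have hmP : (1 <= (n - 1) %/ 2 <= n - 2)%N by lia.
    apply: (H _ hmP); first by apply/eqP; lia.
    apply/BE => //; right; lia.
  + move=> hbm a ha /eqP hab /(BE _ _ ha hb) [h|h]; [exact: hab h | lia].
- move=> b hb; split.
  + move=> H; rewrite ltnNge; apply/negP => hbm.
    have hmP : (1 <= ((n - 1) %/ 2).+1 <= n - 2)%N by lia.
    apply: (H _ hmP); first by apply/eqP; lia.
    apply/BE => //; right; lia.
  + move=> hbm a ha /eqP hab /(BE _ _ hb ha) [h|h]; [by apply: hab; rewrite h | lia].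
- move=> a b ha hb; split.
  + move=> [/eqP hab [/(BE _ _ ha hb) [hle|hle] _]]; first by [].
    exists (b - (n - 1) %/ 2)%N; lia.
  + move=> [j hj].
    split; first by apply/eqP; lia.
    split; first by apply/(BE _ _ ha hb); right; lia.
    move=> [c [hc [/eqP hca [/eqP hcb [/(BE _ _ ha hc) h1 /(BE _ _ hc hb) h2]]]]].
    case: h1 => [h|h1']; first by apply: hca.
    case: h2 => [h|h2']; first by apply: hcb.
    lia.
- move=> a b ha hb /eqP hab; split.
  + move=> /(BE _ _ ha hb) [h|h]; first by [].
    exists (b - (n - 1) %/ 2)%N; lia.
  + move=> [j hj]; apply/(BE _ _ ha hb); right; lia.
Qed.
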